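(* Let $S$ be a ring, let $n>1$ be an integer and let $R,B_1,\ldots,B_n$ be subrings of $S$. Assume that every $B_i$ is integrally closed in $S$ except at most two of them. If $R\subseteq B_1\cup\cdots\cup B_n$, then $R\subseteq B_i$ for some $i\in\{1,\ldots,n\}$.
   Context: All rings are commutative with identity; subrings share the identity of $S$. A subring $B$ of $S$ is integrally closed in $S$ if every element of $S$ integral over $B$ lies in $B$. *)

(* Defs.v *)
From HB Require Import structures.
From mathcomp Require Import all_boot all_order all_algebra.
Set Implicit Arguments. Unset Strict Implicit. Unset Printing Implicit Defensive.
Import GRing.Theory.
Local Open Scope ring_scope.

Definition is_subring (S : comNzRingType) (B : {pred S}) : Prop := subring_closed B.

Definition integral_over (S : comNzRingType) (B : {pred S}) (x : S) : Prop :=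
  exists p : {poly S}, [/\ p \is monic, p \is a polyOver B & root p x].

Definition integrally_closed_in (S : comNzRingType) (B : {pred S}) : Prop :=
  forall x : S, integral_over B x -> x \in B.

(* Main.v *)
Require Import Defs.
From mathcomp Require Import all_boot all_order all_algebra.
From Stdlib Require Import Classical.
Set Implicit Arguments. Unset Strict Implicit.
Import GRing.Theory.
Local Open Scope ring_scope.

Lemma sr1 (S : comNzRingType) (B : {pred S}) : is_subring B -> 1 \in B.
Proof. by case. Qed.
Lemma srB (S : comNzRingType) (B : {pred S}) x y :
  is_subring B -> x \in B -> y \in B -> x - y \in B.
Proof. by case=> _ hB _; apply: hB. Qed.
Lemma srM (S : comNzRingType) (B : {pred S}) x y :
  is_subring B -> x \in B -> y \in B -> x * y \in B.
Proof. by case=> _ _ hB; apply: hB. Qed.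
Lemma sr0 (S : comNzRingType) (B : {pred S}) : is_subring B -> 0 \in B.
Proof. by move=> h; rewrite -(subrr 1); apply: srB => //; apply: sr1. Qed.
Lemma srN (S : comNzRingType) (B : {pred S}) x :
  is_subring B -> x \in B -> - x \in B.
Proof. by move=> h hx; rewrite -sub0r; apply: srB => //; apply: sr0. Qed.
Lemma srD (S : comNzRingType) (B : {pred S}) x y :
  is_subring B -> x \in B -> y \in B -> x + y \in B.
Proof. by move=> h hx hy; rewrite -(opprK y); apply: srB => //; apply: srN. Qed.
Lemma srX (S : comNzRingType) (B : {pred S}) x k :
  is_subring B -> x \in B -> x ^+ k \in B.
Proof.
move=> h hx; elim: k => [|k IH]; first by rewrite expr0; apply: sr1.
by rewrite exprS; apply: srM.
Qed.
Lemma sr_nat (S : comNzRingType) (B : {pred S}) (m : nat) :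
  is_subring B -> m%:R \in B.
Proof.
move=> h; elim: m => [|m IH]; first exact: sr0.
by rewrite mulrS; apply: srD => //; apply: sr1.
Qed.
Lemma sr_int (S : comNzRingType) (B : {pred S}) (z : int) :
  is_subring B -> z%:~R \in B.
Proof.
move=> h; case: z => m; first exact: sr_nat.
by rewrite NegzE mulrNz; apply: srN => //; apply: sr_nat.
Qed.
Lemma sr_horner (S : comNzRingType) (B : {pred S}) (p : {poly S}) x :
  is_subring B -> (forall i, p`_i \in B) -> x \in B -> p.[x] \in B.
Proof.
move=> h hp hx; rewrite horner_coef.
apply: (big_ind (fun y => y \in B)); first exact: sr0.
  by move=> ? ? ? ?; apply: srD.
by move=> i _; apply: srM => //; apply: srX.
Qed.

Definition ip (S : comNzRingType) (p : {poly int}) : {poly S} :=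
  map_poly (fun z : int => z%:~R) p.

Lemma ip_coef (S : comNzRingType) (B : {pred S}) p i :
  is_subring B -> (ip S p)`_i \in B.
Proof. by move=> h; rewrite coef_map /=; apply: sr_int. Qed.

Lemma ip_mono (S : comNzRingType) p : p \is monic -> ip S p \is monic /\ size (ip S p) = size p.
Proof.
move=> hp; split; first exact: monic_map.
apply: size_map_poly_id0; by rewrite (monicP hp) oner_neq0.
Qed.

Lemma IL (S : comNzRingType) (B : {pred S}) a (p : {poly S}) :
  is_subring B -> integrally_closed_in B -> a \notin B -> p \is monic ->
  (1 < size p)%N -> (forall i, p`_i \in B) -> p.[a] \in B -> False.
Proof.
move=> h ic ha hm hs hc hpa; apply: (negP ha); apply: ic.
exists (p - (p.[a])%:P); split.
- apply/monicP; rewrite lead_coefDl ?(monicP hm) // size_polyN size_polyC.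
  by case: (_ != 0); apply: leq_trans hs.
- apply/(all_nthP 0) => i _ /=; rewrite coefB coefC; case: (i == 0%N).
    by apply: srB.
  by rewrite subr0.
- by rewrite rootE hornerD hornerN hornerC subrr.
Qed.
Lemma key (S : comNzRingType) n (R : {pred S}) (B : 'I_n -> {pred S})
  (E F : {set 'I_n}) a b i1 i2 (P : nat -> {poly int}) :
  is_subring R -> (forall i, is_subring (B i)) ->
  (forall k, k \notin E -> integrally_closed_in (B k)) ->
  (forall x, x \in R -> exists2 k, k \in F & x \in B k) ->
  a \in R -> b \in R -> a \in B i1 -> (forall k, k \in F -> k != i1 -> a \notin B k) ->
  b \in B i2 -> b \notin B i1 ->
  (forall k, k \in F -> k != i1 -> k != i2 -> k \notin E) ->
  (forall i, (ip S (P i)).[a] \notin B i2) ->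
  (forall i j, (i < j)%N -> P j - P i \is monic /\ (1 < size (P j - P i)%R)%N) -> False.
Proof.
move=> hR hB hE cov aR bR ai1 auniq bi2 bi1 hF hP hD.
pose w (i : 'I_n) := (ip S (P i)).[a] + b.
have wR i : w i \in R by apply: srD => //; apply: sr_horner => //; move=> j; apply: ip_coef.
have wi1 i : w i \notin B i1.
  apply/negP => h; apply/negP: bi1; apply/negPn.
  have -> : b = w i - (ip S (P i)).[a] by rewrite /w addrC addKr.
  by apply: srB => //; apply: sr_horner => // j; apply: ip_coef.
have wi2 i : w i \notin B i2.
  apply/negP => h; apply/negP: (hP i); apply/negPn.
  have -> : (ip S (P i)).[a] = w i - b by rewrite /w addrK.
  by apply: srB.
pose g (i : 'I_n) := odflt i1 [pick k in F | w i \in B k].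
have gP i : g i \in F /\ w i \in B (g i).
  rewrite /g; case: pickP => [k /andP[-> ->] //|/= H].
  have [k kF kw] := cov _ (wR i); by move: (H k); rewrite kF kw.
have gi1 i : g i != i1.
  apply/eqP => e; have [_ h] := gP i; by rewrite e (negbTE (wi1 i)) in h.
have gi2 i : g i != i2.
  apply/eqP => e; have [_ h] := gP i; by rewrite e (negbTE (wi2 i)) in h.
have ginj : injective g.
  suff H : forall i j : 'I_n, (i < j)%N -> g i = g j -> False.
    move=> i j e; apply/eqP; case: (ltngtP i j) => [ij|ji|]; last by move/val_inj=> ->.
      by case: (H _ _ ij e).
    by case: (H _ _ ji (esym e)).
  move=> i j ij e; set k := g i.
  have [kF wik] := gP i; have [_ wjk] := gP j; rewrite -/k -e in wjk.
  have kE : k \notin E by apply: hF => //; [apply: gi1 | apply: gi2].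
  have [mon sz] := hD _ _ ij; have [mon' sz'] := ip_mono S mon.
  apply: (IL (hB k) (hE _ kE) (auniq _ kF (gi1 i)) mon'); first by rewrite sz'.
    by move=> t; apply: ip_coef.
  have -> : (ip S (P j - P i)).[a] = w j - w i.
    rewrite /w /ip rmorphB /= hornerD.
    by rewrite hornerN opprD addrACA subrr addr0.
  by apply: srB.
have := injF_onto ginj i1; case/codomP => x ex.
by move: (gi1 x); rewrite -ex eqxx.
Qed.
Lemma diffmon (p1 p2 : {poly int}) : p1 \is monic -> p2 \is monic ->
  (size p2 < size p1)%N -> p1 - p2 \is monic /\ (1 < size (p1 - p2)%R)%N.
Proof.
move=> m1 m2 s; have sz : size (p1 - p2) = size p1 by rewrite size_polyDl // size_polyN.
split; first by apply/monicP; rewrite lead_coefDl ?size_polyN // (monicP m1).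
rewrite sz; apply: leq_trans s; rewrite ltnS lt0n size_poly_eq0; exact: monic_neq0.
Qed.

Lemma ipX (S : comNzRingType) a k : (ip S ('X^k)).[a] = a ^+ k.
Proof. by rewrite /ip map_polyXn hornerXn. Qed.

Lemma fam (S : comNzRingType) (C : {pred S}) a : is_subring C -> a \notin C ->
  exists P : nat -> {poly int}, (forall i, (ip S (P i)).[a] \notin C) /\
  (forall i j, (i < j)%N -> P j - P i \is monic /\ (1 < size (P j - P i)%R)%N).
Proof.
move=> hC aC.
case: (classic (exists q : {poly int}, [/\ q \is monic, (1 < size q)%N & (ip S q).[a] \in C])).
- case=> q [qm qs qC]; exists (fun i => 'X + q ^+ i.+1); split.
    move=> i; apply/negP => h; apply/negP: aC; apply/negPn.
    have e : (ip S ('X + q ^+ i.+1)).[a] = a + (ip S q).[a] ^+ i.+1.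
      by rewrite /ip rmorphD rmorphXn /= map_polyX hornerD hornerX horner_exp.
    rewrite e in h; have -> : a = a + (ip S q).[a] ^+ i.+1 - (ip S q).[a] ^+ i.+1 by rewrite addrK.
    by apply: srB => //; apply: srX.
  move=> i j ij; rewrite opprD addrACA subrr add0r.
  apply: diffmon; try exact: monic_exp.
  have e k : size (q ^+ k) = ((size q).-1 * k).+1.
    rewrite -size_exp prednK // size_poly_gt0; exact/monic_neq0/monic_exp.
  rewrite !e ltnS ltn_pmul2l; last by rewrite -subn1 subn_gt0.
  by [].
- move=> nq; exists (fun i => 'X^(i.+1)); split.
    move=> i; apply/negP => h; apply: nq; exists 'X^(i.+1); split.
    + exact: monicXn.
    + by rewrite size_polyXn.
    + by rewrite ipX -ipX.
  move=> i j ij; apply: diffmon; try exact: monicXn.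
  by rewrite !size_polyXn.
Qed.
Lemma pick2 n (E F : {set 'I_n}) : (#|E| <= 2)%N -> (2 <= #|F|)%N ->
  exists i1 i2, [/\ i1 \in F, i2 \in F, i1 != i2 &
     forall k, k \in F -> k != i1 -> k != i2 -> k \notin E].
Proof.
move=> cE cF; set G := F :&: E.
have [i1 [i1F i1G]] : exists i1, i1 \in F /\ (G != set0 -> i1 \in G).
  case: (set0Pn G) => [[x xG]|nx].
    by exists x; split => //; move: xG; rewrite inE => /andP[].
  have : (0 < #|F|)%N by apply: leq_trans cF.
  case/card_gt0P => x xF; exists x; split => // /set0Pn.
have [i2 [i2F i21 i2G]] : exists i2, [/\ i2 \in F, i2 != i1 & (G :\ i1 != set0 -> i2 \in G :\ i1)].
  case: (set0Pn (G :\ i1)) => [[x xG]|nx].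
    exists x; move: (xG); rewrite /G !inE => /andP[xi1 /andP[xF xE]]; split => //.
    by rewrite xi1 xF xE.
  have : (0 < #|F :\ i1|)%N.
    by move: cF; rewrite (cardsD1 i1 F) i1F add1n ltnS.
  case/card_gt0P => y; rewrite !inE => /andP[y1 yF]; exists y; split => //.
exists i1, i2; split => //; first by rewrite eq_sym.
move=> k kF k1 k2; apply/negP => kE.
have kG : k \in G by rewrite inE kF kE.
have i1G' : i1 \in G by apply: i1G; apply/set0Pn; exists k.
have i2G' : i2 \in G :\ i1 by apply: i2G; apply/set0Pn; exists k; rewrite !inE k1 kF kE.
move: i1G' i2G'; rewrite !inE => /andP[_ i1E] /and3P[_ _ i2E].
move: cE; rewrite (cardsD1 i1 E) i1E (cardsD1 i2 (E :\ i1)) !inE i21 i2E /=.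
rewrite (cardsD1 k (E :\ i1 :\ i2)) !inE k1 k2 kE /=.
by [].
Qed.
Lemma indm (S : comNzRingType) n (R : {pred S}) (B : 'I_n -> {pred S}) (E : {set 'I_n}) :
  is_subring R -> (forall i, is_subring (B i)) -> (#|E| <= 2)%N ->
  (forall k, k \notin E -> integrally_closed_in (B k)) ->
  forall m (F : {set 'I_n}), (#|F| <= m)%N ->
  (forall x, x \in R -> exists2 k, k \in F & x \in B k) ->
  exists i, {subset R <= B i}.
Proof.
move=> hR hB cE hE m; elim: m => [|m IH] F cF cov.
  have [k kF _] := cov _ (sr1 hR).
  by move: cF; rewrite (cardsD1 k F) kF.
case: (classic (exists i, i \in F /\ forall x, x \in R -> exists2 k, k \in F :\ i & x \in B k)).
  case=> i [iF covi]; apply: (IH (F :\ i)) => //.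
  by move: cF; rewrite (cardsD1 i F) iF add1n ltnS.
move=> nrem.
have uniq i : i \in F -> exists u, [/\ u \in R, u \in B i &
    forall k, k \in F -> k != i -> u \notin B k].
  move=> iF; apply: NNPP => nu; apply: nrem; exists i; split => // x xR.
  apply: NNPP => nx; apply: nu; exists x; split => //.
    have [k kF xk] := cov _ xR; case: (eqVneq k i) => [<- //|ki].
    by case: nx; exists k => //; rewrite !inE ki kF.
  move=> k kF ki; apply/negP => xk; apply: nx; exists k => //; by rewrite !inE ki kF.
case: (leqP #|F| 1) => c1.
  have [k kF _] := cov _ (sr1 hR); exists k => x xR.
  have [k' k'F xk'] := cov _ xR.
  by have := card_le1_eqP c1 k' k k'F kF => e; rewrite e.
have [i1 [i2 [i1F i2F i12 hF]]] := pick2 cE c1.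
have [a [aR ai1 auniq]] := uniq _ i1F.
have [b [bR bi2 buniq]] := uniq _ i2F.
have bi1 : b \notin B i1 by apply: buniq => //; rewrite eq_sym.
have ai2 : a \notin B i2 by apply: auniq => //; rewrite eq_sym.
have [P [hP hD]] := fam (hB i2) ai2.
by case: (key hR hB hE cov aR bR ai1 auniq bi2 bi1 hF hP hD).
Qed.

Theorem mainTheorem2 (S : comNzRingType) (n : nat) (R : {pred S})
    (B : 'I_n -> {pred S}) :
  (1 < n)%N ->
  is_subring R ->
  (forall i, is_subring (B i)) ->
  (exists E : {set 'I_n}, (#|E| <= 2)%N /\
     forall i, i \notin E -> integrally_closed_in (B i)) ->
  (forall x, x \in R -> exists i, x \in B i) ->
  exists i, {subset R <= B i}.
Proof.
move=> _ hR hB [E [cE hE]] cov.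
apply: (indm hR hB cE hE (leqnn #|[set: 'I_n]|)) => x xR.
by have [k xk] := cov _ xR; exists k; rewrite ?inE.
Qed.
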